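(* Let $G$ be a simple cubic graph and $(G',r)$ be constructed from $G$ as described in the context. Then there exists a minimum-size vector connectivity set $S$ for $(G',r)$ that contains no vertex of the form $w_{x,e}$ or $w_e$ (for $e\in E(G)$, $x$ an endpoint of $e$).
   Context: Construction of $G'$ from a cubic graph $G$: start with $G$. (1) For each edge $e=xy$ of $G$, delete $xy$, add three new vertices $w_{x,e},w_e,w_{y,e}$ and the edges $xw_{x,e}, w_{x,e}w_e, w_ew_{y,e}, w_{y,e}y$. (2) For each edge $e=xy$ of $G$, add two new vertices $z_{x,e},z_{y,e}$ and the edges $w_{x,e}z_{x,e}, z_{x,e}w_e, w_ez_{y,e}, z_{y,e}w_{y,e}$. (3) For every vertex $x$ of $G$ with incident edges $e,f,g$, add the edges $w_{x,e}w_{x,f}, w_{x,e}w_{x,g}, w_{x,f}w_{x,g}$. Requirements: for every edge $e=xy$ of $G$, $r(w_{x,e})=r(w_{y,e})=4$ and $r(w_e)=3$; $r(v')=0$ for all other vertices of $G'$. For $S\subseteq V(G')$ and $v\in V(G')\setminus S$, a $v$--$S$ fan of order $k$ is a collection of $k$ paths, each connecting $v$ to a vertex of $S$, pairwise vertex-disjoint except at $v$; $v$ is $k$-linked to $S$ if such a fan exists. A vector connectivity set for $(G',r)$ is a set $S$ such that every $v\in V(G')\setminus S$ is $r(v)$-linked to $S$. *)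

(* Defs.v *)
From mathcomp Require Import all_boot.
Set Implicit Arguments. Unset Strict Implicit. Unset Printing Implicit Defensive.

Definition simple_graph (V : finType) (adj : rel V) : Prop :=
  irreflexive adj /\ symmetric adj.

Definition cubic (V : finType) (adj : rel V) : Prop :=
  forall x : V, #|[set y | adj x y]| = 3.

Section Construction.
Variables (V : finType) (adj : rel V).

(* Raw vertex labels of G':
   inl (inl x)        : original vertex x of G
   inl (inr (x, y))   : w_{x,e}   for e = xy
   inr (inl A)        : w_e       for e = A = {x,y}
   inr (inr (x, y))   : z_{x,e}   for e = xy *)
Definition rawG' : finType := (V + (V * V) + ({set V} + (V * V)))%type.

Definition validG' (u : rawG') : bool :=
  match u with
  | inl (inl _) => true
  | inl (inr (x, y)) => adj x y
  | inr (inl A) => [exists x, exists y, adj x y && (A == [set x; y])]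
  | inr (inr (x, y)) => adj x y
  end.

Definition VG' : finType := {u : rawG' | validG' u}.

Definition edge0 (u v : rawG') : bool :=
  match u, v with
  | inl (inl x), inl (inr (a, b)) => (a == x) && adj a b
  | inl (inr (a, b)), inr (inl A) => adj a b && (A == [set a; b])
  | inl (inr (a, b)), inr (inr (c, d)) => [&& a == c, b == d & adj a b]
  | inr (inr (c, d)), inr (inl A) => adj c d && (A == [set c; d])
  (* step (3): triangle on w_{x,e}, w_{x,f}, w_{x,g} *)
  | inl (inr (a, b)), inl (inr (c, d)) => [&& a == c, b != d, adj a b & adj c d]
  | _, _ => false
  end.

Definition adjG' : rel VG' :=
  fun u v => edge0 (val u) (val v) || edge0 (val v) (val u).

Definition is_w (u : VG') : bool :=
  match val u with
  | inl (inr _) => true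
  | inr (inl _) => true
  | _ => false
  end.

Definition rG' (u : VG') : nat :=
  match val u with
  | inl (inr _) => 4
  | inr (inl _) => 3
  | _ => 0
  end.

End Construction.

Section VectorConnectivity.
Variables (W : finType) (e : rel W).

Definition vS_path (S : {set W}) (v : W) (p : seq W) : bool :=
  [&& p != [::], path e v p & last v p \in S].

(* v is k-linked to S: there is a v--S fan of order k, i.e. k paths from v
   to S, pairwise vertex-disjoint except at v (the paths are given by their
   vertex lists after v). *)
Definition k_linked (S : {set W}) (v : W) (k : nat) : Prop :=
  exists ps : seq (seq W),
    [/\ size ps = k, all (vS_path S v) ps &
        pairwise (fun p q => all (fun x => x \notin q) p) ps].

Definition vc_set (r : W -> nat) (S : {set W}) : Prop :=
  forall v, v \notin S -> k_linked S v (r v).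

Definition min_vc_set (r : W -> nat) (S : {set W}) : Prop :=
  vc_set r S /\ forall S' : {set W}, vc_set r S' -> #|S| <= #|S'|.

End VectorConnectivity.

(* Main.v *)
Require Import Defs.
From mathcomp Require Import all_boot.
From Stdlib Require Import Classical.
Set Implicit Arguments. Unset Strict Implicit. Unset Printing Implicit Defensive.


Lemma walk_hits (W : finType) (e : rel W) (S C Q : {set W}) :
  (forall u, u \in C -> u \notin S) ->
  (forall u w, u \in C -> e u w -> (w \in C) || (w \in Q)) ->
  forall p u, u \in C -> path e u p -> last u p \in S -> has (mem Q) p.
Proof.
move=> CS cl; elim=> [|w p IH] u uC /=.
  by move=> _ uS; move: (CS u uC); rewrite uS.
case/andP=> euw pw lS.
case/orP: (cl u w uC euw) => [wC|wQ]; last by rewrite wQ.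
by rewrite (IH w wC pw lS) orbT.
Qed.

Lemma fan_bound (W : finType) (ps : seq (seq W)) (Q : {set W}) :
  all (has (mem Q)) ps -> pairwise (fun p q => all (fun x => x \notin q) p) ps ->
  size ps <= #|Q|.
Proof.
elim: ps Q => [|p ps IH] Q //= /andP[hp hps] /andP[hall hpw].
case/hasP: hp => u up uQ.
have H: size ps <= #|Q :\ u|.
  apply: IH hpw; apply/allP => q qin.
  case/hasP: (allP hps q qin) => w wq wQ.
  apply/hasP; exists w => //; rewrite /= !inE; move: wQ; rewrite /= => ->; rewrite andbT.
  apply/eqP=> ew; subst w.
  by move: (allP (allP hall q qin) u up); rewrite wq.
have uQ' : u \in Q by []. by rewrite (cardsD1 u Q) uQ' add1n ltnS.
Qed.

Lemma separator (W : finType) (e : rel W) (S C Q : {set W}) v k :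
  v \in C -> (forall u, u \in C -> u \notin S) ->
  (forall u w, u \in C -> e u w -> (w \in C) || (w \in Q)) ->
  #|Q| < k -> ~ k_linked e S v k.
Proof.
move=> vC CS cl Qk [ps [sz allp pw]].
have : size ps <= #|Q|.
  apply: fan_bound pw; apply/allP => p pin.
  case/and3P: (allP allp p pin) => _ pp lp.
  exact: (walk_hits CS cl vC pp lp).
by rewrite sz leqNgt Qk.
Qed.

Lemma eq_ll (A B : eqType) (a b : A) : (inl a == inl b :> A + B) = (a == b). Proof. by []. Qed.
Lemma eq_rr (A B : eqType) (a b : B) : (inr a == inr b :> A + B) = (a == b). Proof. by []. Qed.
Lemma eq_lr (A B : eqType) (a : A) (b : B) : (inl a == inr b :> A + B) = false. Proof. by []. Qed.
Lemma eq_rl (A B : eqType) (a : A) (b : B) : (inr b == inl a :> A + B) = false. Proof. by []. Qed.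

Lemma set2C_eq (T : finType) (x y : T) : ([set x; y] == [set y; x]) = true.
Proof. by rewrite setUC eqxx. Qed.

Lemma set2_inv (T : finType) (x y a b : T) : a != b ->
  [set x; y] = [set a; b] -> (a = x /\ b = y) \/ (a = y /\ b = x).
Proof.
move=> nab E.
have: a \in [set x; y] by rewrite E set21.
have: b \in [set x; y] by rewrite E set22.
rewrite !inE => hb ha; move: ha hb nab => /orP[]/eqP-> /orP[]/eqP->; rewrite ?eqxx //; auto.
Qed.

Lemma set2_neq (T : finType) (x a b : T) : a != x -> a != b ->
  ([set x; a] == [set x; b]) = false.
Proof.
move=> nax nab; apply/negbTE/eqP => E.
have: a \in [set x; b] by rewrite -E set22.
by rewrite !inE (negbTE nax) (negbTE nab).
Qed.

Lemma ffeq (T : finType) (A B : {set T}) : (finfun_of_set A == finfun_of_set B) = (A == B).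
Proof. by []. Qed.

Lemma pw_regions (W U : eqType) (f : W -> U) (ps : seq (seq W)) (Rs : seq (seq U)) :
  all2 (fun p R => all (fun u => f u \in R) p) ps Rs ->
  pairwise (fun R R' => all (fun r => r \notin R') R) Rs ->
  pairwise (fun p q => all (fun u => u \notin q) p) ps.
Proof.
elim: ps Rs => [|p ps IH] [|R Rs] //= /andP[pR hall] /andP[hR hpw].
rewrite (IH Rs hall hpw) andbT.
elim: ps Rs hall hR {IH hpw} => [|q ps IH2] [|R' Rs] //= /andP[qR' hall] /andP[hRR' hR].
rewrite (IH2 Rs hall hR) andbT.
apply/allP => u up; apply/negP => uq.
have fuR := allP pR u up. have fuR' := allP qR' u uq.
by move: (allP hRR' _ fuR); rewrite fuR'.
Qed.


Section Graph.
Variables (V : finType) (adj : rel V).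
Hypothesis Hirr : irreflexive adj.
Hypothesis Hsym : symmetric adj.
Hypothesis Hcub : cubic adj.

Local Notation G := (VG' adj).
Local Notation raw := (rawG' V).
Definition vX (x : V) : G := @Sub _ _ G (inl (inl x)) isT.
Definition vW x y (h : adj x y) : G := @Sub _ _ G (inl (inr (x, y))) h.
Definition vZ x y (h : adj x y) : G := @Sub _ _ G (inr (inr (x, y))) h.
Lemma vE_proof x y (h : adj x y) : validG' adj (inr (inl [set x; y])).
Proof. by apply/existsP; exists x; apply/existsP; exists y; rewrite h eqxx. Qed.
Definition vE x y (h : adj x y) : G := @Sub _ _ G _ (vE_proof h).

Lemma adj_neq x y : adj x y -> x != y.
Proof. by apply: contraTneq => ->; rewrite Hirr. Qed.

Lemma nbr_X x w : adjG' (vX x) w -> exists y, adj x y /\ val w = inl (inr (x, y)).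
Proof.
case: w => [[[x'|[a b]]|[A|[c d]]] Hv]; rewrite /adjG' /= ?orbF //.
by case/andP=> /eqP -> hab; exists b.
Qed.

Lemma nbr_W x y (h : adj x y) w : adjG' (vW h) w ->
  [\/ val w = inl (inl x), val w = inr (inl [set x; y]), val w = inr (inr (x, y)) |
      exists y', [/\ adj x y', y' != y & val w = inl (inr (x, y'))]].
Proof.
case: w => [[[x'|[a b]]|[A|[c d]]] Hv]; rewrite /adjG' /= ?orbF //=.
- by case/andP=> /eqP -> _; constructor 1.
- case/orP=> [/and4P[/eqP <- nb _ hb]|/and4P[/eqP -> nb hb _]];
    constructor 4; exists b; split=> //; by rewrite eq_sym.
- by case/andP=> _ /eqP ->; constructor 2.
- by case/and3P=> /eqP <- /eqP <- _; constructor 3.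
Qed.

Lemma nbr_Z x y (h : adj x y) w : adjG' (vZ h) w ->
  val w = inl (inr (x, y)) \/ val w = inr (inl [set x; y]).
Proof.
case: w => [[[x'|[a b]]|[A|[c d]]] Hv]; rewrite /adjG' /= ?orbF //=.
- by case/and3P=> /eqP <- /eqP <- _; left.
- by case/andP=> _ /eqP ->; right.
Qed.

Lemma nbr_E x y (h : adj x y) w : adjG' (vE h) w ->
  [\/ val w = inl (inr (x, y)), val w = inl (inr (y, x)),
      val w = inr (inr (x, y)) | val w = inr (inr (y, x))].
Proof.
case: w => [[[x'|[a b]]|[A|[c d]]] Hv]; rewrite /adjG' /= ?orbF //=.
- case/andP=> hab /eqP/(set2_inv (adj_neq hab)) [[-> ->]|[-> ->]].
  + by constructor 1.
  + by constructor 2.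
- case/andP=> hab /eqP/(set2_inv (adj_neq hab)) [[-> ->]|[-> ->]].
  + by constructor 3.
  + by constructor 4.
Qed.

Lemma nbrs3 x y : adj x y -> exists y1 y2,
  [/\ adj x y1, adj x y2, (y1 != y) && (y2 != y), y1 != y2 &
      forall y', adj x y' -> [\/ y' = y, y' = y1 | y' = y2]].
Proof.
move=> h.
set A := [set y' | adj x y'].
have yA : y \in A by rewrite inE.
have : #|A :\ y| == 2.
  by move: (Hcub x); rewrite -/A (cardsD1 y A) yA add1n => [[->]].
case/cards2P=> y1 [y2 [n12 E]].
have h1 : y1 \in A :\ y by rewrite E set21.
have h2 : y2 \in A :\ y by rewrite E set22.
move: h1 h2; rewrite !inE => /andP[n1 a1] /andP[n2 a2].
exists y1, y2; split=> //; first by rewrite n1 n2. move=> y' hy'.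
case: (eqVneq y' y) => [->|ny]; first by constructor 1.
have : y' \in A :\ y by rewrite !inE ny hy'.
by rewrite E !inE => /orP[]/eqP->; [constructor 2|constructor 3].
Qed.

Local Notation vc := (vc_set (@adjG' V adj) (@rG' V adj)).

Lemma factA (S : {set G}) x y (h : adj x y) :
  vc S -> [|| vX x \in S, vW h \in S | vZ h \in S].
Proof.
move=> hvc; apply/negPn/negP; rewrite !negb_or => /and3P[nX nW nZ].
have [y1 [y2 [h1 h2 /andP[n1 n2] n12 all3]]] := nbrs3 h.
apply: (separator (C := [set u in [:: vW h; vX x; vZ h]])
                  (Q := [set u in [:: vE h; vW h1; vW h2]]) _ _ _ _ (hvc _ nW)).
- by rewrite !inE eqxx.
- by move=> u; rewrite !inE => /or3P[]/eqP->.
- move=> u w; rewrite !inE => /or3P[]/eqP-> ; [move/nbr_W | move/nbr_X | move/nbr_Z].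
  + case => [e|e|e|[y' [hy' ny' e]]].
    * have -> : w = vX x by apply: val_inj; rewrite e.
      by rewrite eqxx ?orbT.
    * have -> : w = vE h by apply: val_inj; rewrite e.
      by rewrite eqxx ?orbT.
    * have -> : w = vZ h by apply: val_inj; rewrite e.
      by rewrite eqxx ?orbT.
    * case: (all3 _ hy') => ey; subst y'; first by rewrite eqxx in ny'.
      - have -> : w = vW h1 by apply: val_inj; rewrite e.
        by rewrite eqxx ?orbT.
      - have -> : w = vW h2 by apply: val_inj; rewrite e.
        by rewrite eqxx ?orbT.
  + case=> y' [hy' e]; case: (all3 _ hy') => ey; subst y'.
    - have -> : w = vW h by apply: val_inj; rewrite e.
      by rewrite eqxx ?orbT.
    - have -> : w = vW h1 by apply: val_inj; rewrite e.
      by rewrite eqxx ?orbT.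
    - have -> : w = vW h2 by apply: val_inj; rewrite e.
      by rewrite eqxx ?orbT.
  + case=> e.
    - have -> : w = vW h by apply: val_inj; rewrite e.
      by rewrite eqxx ?orbT.
    - have -> : w = vE h by apply: val_inj; rewrite e.
      by rewrite eqxx ?orbT.
- by rewrite cardsE (leq_ltn_trans (card_size _)).
Qed.

Lemma factB (S : {set G}) x y (h : adj x y) (h' : adj y x) :
  vc S -> [|| vW h \in S, vW h' \in S, vE h \in S, vZ h \in S | vZ h' \in S].
Proof.
move=> hvc; apply/negPn/negP; rewrite !negb_or => /and5P[nW nW' nE nZ nZ'].
apply: (separator (C := [set u in [:: vE h; vZ h; vZ h']])
                  (Q := [set u in [:: vW h; vW h']]) _ _ _ _ (hvc _ nE)).
- by rewrite !inE eqxx.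
- by move=> u; rewrite !inE => /or3P[]/eqP->.
- move=> u w; rewrite !inE => /or3P[]/eqP-> ; [move/nbr_E | move/nbr_Z | move/nbr_Z].
  + case => e.
    * have -> : w = vW h by apply: val_inj; rewrite e.
      by rewrite eqxx ?orbT.
    * have -> : w = vW h' by apply: val_inj; rewrite e.
      by rewrite eqxx ?orbT.
    * have -> : w = vZ h by apply: val_inj; rewrite e.
      by rewrite eqxx ?orbT.
    * have -> : w = vZ h' by apply: val_inj; rewrite e.
      by rewrite eqxx ?orbT.
  + case=> e.
    - have -> : w = vW h by apply: val_inj; rewrite e.
      by rewrite eqxx ?orbT.
    - have -> : w = vE h by apply: val_inj; rewrite e.
      by rewrite eqxx ?orbT.
  + case=> e.
    - have -> : w = vW h' by apply: val_inj; rewrite e.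
      by rewrite eqxx ?orbT.
    - have -> : w = vE h by apply: val_inj; rewrite e /= setUC.
      by rewrite eqxx ?orbT.
- by rewrite cardsE (leq_ltn_trans (card_size _)).
Qed.

Definition graw (r : raw) : raw :=
  match r with
  | inl (inr (x, y)) => inr (inr (x, y))
  | inr (inl A) =>
      if [pick xy : V * V | adj xy.1 xy.2 && (A == [set xy.1; xy.2])] is Some xy
      then inr (inr xy) else r
  | _ => r
  end.

Definition Sp (S : {set G}) : {set G} :=
  [set u | [exists v in S, graw (val v) == val u]].

Lemma Sp_card (S : {set G}) : #|Sp S| <= #|S|.
Proof.
rewrite -(card_imset _ val_inj).
apply: (leq_trans _ (leq_imset_card (fun v : G => graw (val v)) S)).
apply: subset_leq_card; apply/subsetP => r /imsetP [u].
rewrite inE => /existsP [v /andP[vS /eqP e]] ->.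
by apply/imsetP; exists v.
Qed.

Lemma Sp_nw (S : {set G}) u : u \in Sp S -> ~~ is_w u.
Proof.
rewrite inE => /existsP [v /andP [_ /eqP e]]; rewrite /is_w -e.
case: v e => [[[x|[a b]]|[A|[c d]]] Hv] _ //=.
case: pickP => [xy _|none] //=.
case/existsP: Hv => x /existsP [y /andP [hxy /eqP EA]].
by move: (none (x, y)); rewrite /= hxy EA eqxx.
Qed.

Lemma Sp_mem (S : {set G}) (v u : G) : v \in S -> graw (val v) = val u -> u \in Sp S.
Proof. by move=> vS e; rewrite inE; apply/existsP; exists v; rewrite vS e eqxx. Qed.

Lemma Sp_ii (S : {set G}) x y (h : adj x y) : vc S -> (vX x \in Sp S) || (vZ h \in Sp S).
Proof.
move=> hvc; case/or3P: (factA h hvc) => hS.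
- by rewrite (Sp_mem hS).
- by rewrite (Sp_mem (u := vZ h) hS) ?orbT.
- by rewrite (Sp_mem (u := vZ h) hS) ?orbT.
Qed.

Lemma Sp_i (S : {set G}) x y (h : adj x y) (h' : adj y x) : vc S -> (vZ h \in Sp S) || (vZ h' \in Sp S).
Proof.
move=> hvc; move: (factB h h' hvc) => /orP[hS|/orP[hS|/orP[hS|/orP[hS|hS]]]].
- by rewrite (Sp_mem (u := vZ h) hS).
- by rewrite (Sp_mem (u := vZ h') hS) ?orbT.
- move: hS; set r := graw (val (vE h)) => hS.
  have : graw (val (vE h)) = r by [].
  rewrite /=; case: pickP => [[a b] /andP[/= hab /eqP E]|none].
  + case: (set2_inv (adj_neq hab) E) => [[ea eb]|[ea eb]]; subst a b => er.
    * by rewrite (Sp_mem (u := vZ h) hS) // -er.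
    * by rewrite (Sp_mem (u := vZ h') hS) ?orbT // -er.
  + by move: (none (x, y)); rewrite /= h eqxx.
- by rewrite (Sp_mem (u := vZ h) hS).
- by rewrite (Sp_mem (u := vZ h') hS) ?orbT.
Qed.

Section Fans.
Variable T : {set G}.
Hypothesis Hi : forall x y (h : adj x y) (h' : adj y x), (vZ h \in T) || (vZ h' \in T).
Hypothesis Hii : forall x y (h : adj x y), (vX x \in T) || (vZ h \in T).

Lemma Fi x y (h : adj x y) (h' : adj y x) : (vZ h \in T) = false -> vZ h' \in T.
Proof. by move=> e; move: (Hi h h'); rewrite e. Qed.
Lemma Fii x y (h : adj x y) : (vZ h \in T) = false -> vX x \in T.
Proof. by move=> e; move: (Hii h); rewrite e orbF. Qed.

Local Notation vSp := (vS_path (@adjG' V adj) T).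
Definition inR (R : seq raw) (p : seq G) := all (fun u => val u \in R) p.


Lemma adj_WZ x y (h : adj x y) : adjG' (vW h) (vZ h).
Proof. by rewrite /adjG' /= !eqxx h. Qed.
Lemma adj_WX x y (h : adj x y) : adjG' (vW h) (vX x).
Proof. by rewrite /adjG' /= eqxx h. Qed.
Lemma adj_WE x y (h : adj x y) : adjG' (vW h) (vE h).
Proof. by rewrite /adjG' /= eqxx h. Qed.
Lemma adj_EW x y (h : adj x y) : adjG' (vE h) (vW h).
Proof. by rewrite /adjG' /= eqxx h. Qed.
Lemma adj_EZ x y (h : adj x y) : adjG' (vE h) (vZ h).
Proof. by rewrite /adjG' /= eqxx h. Qed.
Lemma adj_EW' x y (h : adj x y) (h' : adj y x) : adjG' (vE h) (vW h').
Proof. by rewrite /adjG' /= h' ?ffeq set2C_eq. Qed.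
Lemma adj_EZ' x y (h : adj x y) (h' : adj y x) : adjG' (vE h) (vZ h').
Proof. by rewrite /adjG' /= h' ?ffeq set2C_eq. Qed.
Lemma adj_WW x y y1 (h : adj x y) (h1 : adj x y1) : y != y1 -> adjG' (vW h) (vW h1).
Proof. by move=> n; rewrite /adjG' /= eqxx n h h1. Qed.

Lemma inR_cons a R p : inR R p -> inR (a :: R) p.
Proof. by move=> /allP H; apply/allP => u /H; rewrite inE => ->; rewrite orbT. Qed.

Lemma vS_cons v u p : p != [::] -> vSp v (u :: p) = adjG' v u && vSp u p.
Proof. case: p => // a p _; rewrite /vS_path /=. by case: (adjG' v u). Qed.

Lemma route_own x y (h : adj x y) :
  exists p, vSp (vW h) p && inR [:: inr (inr (x, y)); inl (inl x)] p.
Proof.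
case E: (vZ h \in T); [exists [:: vZ h] | exists [:: vX x]].
- by rewrite /vS_path /inR /= adj_WZ E !inE eqxx.
- by rewrite /vS_path /inR /= adj_WX (Fii E) !inE eqxx orbT.
Qed.

Lemma route_c x y (h : adj x y) (h' : adj y x) :
  exists p, vSp (vW h) p &&
  inR [:: inr (inl [set x; y]); inr (inr (y, x)); inl (inr (y, x)); inl (inl y)] p.
Proof.
case E: (vZ h' \in T); [exists [:: vE h; vZ h'] | exists [:: vE h; vW h'; vX y]].
- by rewrite /vS_path /inR /= adj_WE adj_EZ' E !inE !eqxx ?orbT.
- by rewrite /vS_path /inR /= adj_WE adj_EW' adj_WX (Fii E) !inE !eqxx ?orbT.
Qed.

Lemma route_seg x y1 (h1 : adj x y1) (h1' : adj y1 x) :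
  exists p, vSp (vW h1) p && inR [:: inr (inr (x, y1)); inr (inl [set x; y1]); inr (inr (y1, x))] p.
Proof.
case E: (vZ h1 \in T); [exists [:: vZ h1] | exists [:: vE h1; vZ h1']].
- by rewrite /vS_path /inR /= adj_WZ E !inE !eqxx ?orbT.
- by rewrite /vS_path /inR /= adj_WE adj_EZ' (Fi h1' E) !inE !eqxx ?orbT.
Qed.

Lemma route_b x y (h : adj x y) (h' : adj y x) :
  exists p, vSp (vE h) p && inR [:: inr (inr (y, x)); inl (inr (y, x)); inl (inl y)] p.
Proof.
case E: (vZ h' \in T); [exists [:: vZ h'] | exists [:: vW h'; vX y]].
- by rewrite /vS_path /inR /= adj_EZ' E !inE !eqxx ?orbT.
- by rewrite /vS_path /inR /= adj_EW' adj_WX (Fii E) !inE !eqxx ?orbT.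
Qed.

Lemma fanW x y (h : adj x y) : k_linked (@adjG' V adj) T (vW h) 4.
Proof.
have h' : adj y x by rewrite Hsym.
have [y1 [y2 [h1 h2 /andP[n1 n2] n12 _]]] := nbrs3 h.
have h1' : adj y1 x by rewrite Hsym.
have h2' : adj y2 x by rewrite Hsym.
have nxy := adj_neq h; have nx1 := adj_neq h1; have nx2 := adj_neq h2.
have e1 := negbTE nxy; have e2 := negbTE nx1; have e3 := negbTE nx2.
have e4 := negbTE n1; have e5 := negbTE n2; have e6 := negbTE n12.
rewrite eq_sym in nxy; rewrite eq_sym in nx1; rewrite eq_sym in nx2.
rewrite eq_sym in n1; rewrite eq_sym in n2; rewrite eq_sym in n12.
have f1 := negbTE nxy; have f2 := negbTE nx1; have f3 := negbTE nx2.
have f4 := negbTE n1; have f5 := negbTE n2; have f6 := negbTE n12.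
have s1 := set2_neq nxy (negbT f4).
have s2 := set2_neq nxy (negbT f5).
have s3 := set2_neq nx1 (negbT e4).
have s4 := set2_neq nx1 (negbT e6).
have s5 := set2_neq nx2 (negbT e5).
have s6 := set2_neq nx2 (negbT f6).
have [p1 /andP[P1 R1]] := route_own h.
have [p2 /andP[P2 R2]] := route_c h h'.
have [p3 /andP[P3 R3]] := route_seg h1 h1'.
have [p4 /andP[P4 R4]] := route_seg h2 h2'.
have ne3 : p3 != [::] by case/and3P: P3.
have ne4 : p4 != [::] by case/and3P: P4.
exists [:: p1; p2; vW h1 :: p3; vW h2 :: p4]; split => //.
- by rewrite /= P1 P2 !vS_cons // P3 P4 !adj_WW.
- apply: (pw_regions (f := val)
    (Rs := [:: [:: inr (inr (x, y)); inl (inl x)];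
               [:: inr (inl [set x; y]); inr (inr (y, x)); inl (inr (y, x)); inl (inl y)];
               inl (inr (x, y1)) :: [:: inr (inr (x, y1)); inr (inl [set x; y1]); inr (inr (y1, x))];
               inl (inr (x, y2)) :: [:: inr (inr (x, y2)); inr (inl [set x; y2]); inr (inr (y2, x))]])).
    have R3' := inR_cons (inl (inr (x, y1))) R3.
    have R4' := inR_cons (inl (inr (x, y2))) R4.
    by move: R1 R2 R3' R4'; rewrite /inR /= => -> -> -> ->; rewrite !inE !eqxx.
  rewrite /= !inE ?(eq_ll, eq_rr, eq_lr, eq_rl, xpair_eqE) ?eqxx
     ?(e1, e2, e3, e4, e5, e6, f1, f2, f3, f4, f5, f6, s1, s2, s3, s4, s5, s6) //.
Qed.

Lemma fanE x y (h : adj x y) (h' : adj y x) : vZ h \in T -> k_linked (@adjG' V adj) T (vE h) 3.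
Proof.
move=> Zin.
have [y1 [y2 [h1 h2 /andP[n1 n2] n12 _]]] := nbrs3 h.
have h1' : adj y1 x by rewrite Hsym.
have nxy := adj_neq h; have nx1 := adj_neq h1.
have e1 := negbTE nxy; have e2 := negbTE nx1; have e4 := negbTE n1.
rewrite eq_sym in nxy; rewrite eq_sym in nx1; rewrite eq_sym in n1.
have f1 := negbTE nxy; have f2 := negbTE nx1; have f4 := negbTE n1.
have s1 := set2_neq nxy (negbT f4).
have s3 := set2_neq nx1 (negbT e4).
have [p3 /andP[P3 R3]] := route_seg h1 h1'.
have [p2 /andP[P2 R2]] := route_b h h'.
have ne3 : p3 != [::] by case/and3P: P3.
exists [:: [:: vZ h]; vW h :: vW h1 :: p3; p2]; split => //.
- have Q2 : vSp (vE h) (vW h :: vW h1 :: p3).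
    by rewrite vS_cons // vS_cons // adj_EW adj_WW // P3.
  have Q1 : vSp (vE h) [:: vZ h] by rewrite /vS_path /= adj_EZ Zin.
  by rewrite /= Q1 Q2 P2.
- apply: (pw_regions (f := val)
    (Rs := [:: [:: inr (inr (x, y))];
               inl (inr (x, y)) :: inl (inr (x, y1)) :: [:: inr (inr (x, y1)); inr (inl [set x; y1]); inr (inr (y1, x))];
               [:: inr (inr (y, x)); inl (inr (y, x)); inl (inl y)]])).
    have R3' := inR_cons (inl (inr (x, y))) (inR_cons (inl (inr (x, y1))) R3).
    by move: R2 R3'; rewrite /inR /= => -> ->; rewrite !inE !eqxx ?orbT.
  rewrite /= !inE ?(eq_ll, eq_rr, eq_lr, eq_rl, xpair_eqE) ?eqxx
     ?(e1, e2, e4, f1, f2, f4, s1, s3) //.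
Qed.


Lemma vc_T : vc_set (@adjG' V adj) (@rG' V adj) T.
Proof.
move=> v _; case: v => [[[x|[x y]]|[A|[x y]]] Hv].
- by exists [::].
- exact: (fanW Hv).
- case/existsP: (Hv) => x /existsP [y /andP [hxy /eqP EA]].
  have h' : adj y x by rewrite Hsym.
  case/orP: (Hi hxy h') => Z.
  + have -> : exist _ (inr (inl A)) Hv = vE hxy :> G by apply: val_inj; rewrite /= EA.
    exact: fanE.
  + have -> : exist _ (inr (inl A)) Hv = vE h' :> G by apply: val_inj; rewrite /= EA setUC.
    exact: fanE.
- by exists [::].
Qed.

End Fans.

Lemma exists_min : exists S : {set G}, min_vc_set (@adjG' V adj) (@rG' V adj) S.
Proof.
suff H : forall n (S : {set G}), #|S| <= n -> vc S ->
    exists S0, min_vc_set (@adjG' V adj) (@rG' V adj) S0.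
  apply: (H #|[set: G]| setT (leqnn _)) => v; by rewrite inE.
elim=> [|n IH] S hS hvc.
  by exists S; split => // S' _; rewrite (leq_trans hS).
case: (classic (forall S', vc S' -> #|S| <= #|S'|)) => [H|H]; first by exists S.
case: (not_all_ex_not _ _ H) => S' H'.
case: (imply_to_and _ _ H') => vS' nle.
apply: (IH S') => //.
move/negP: nle; rewrite -ltnNge => lt.
by rewrite -ltnS (leq_trans lt hS).
Qed.

Lemma main_sec : exists S : {set G},
  min_vc_set (@adjG' V adj) (@rG' V adj) S /\ (forall u, u \in S -> ~~ is_w u).
Proof.
have [S0 [hvc hmin]] := exists_min.
exists (Sp S0); split; last by move=> u; exact: Sp_nw.
split.
- apply: vc_T.
  + by move=> x y h h'; exact: Sp_i.
  + by move=> x y h; exact: Sp_ii.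
- by move=> S' hS'; exact: leq_trans (Sp_card S0) (hmin S' hS').
Qed.

End Graph.

Theorem mainTheorem5 (V : finType) (adj : rel V) :
  simple_graph adj -> cubic adj ->
  exists S : {set VG' adj},
    min_vc_set (@adjG' V adj) (@rG' V adj) S /\
    (forall u, u \in S -> ~~ is_w u).
Proof. by move=> [Hirr Hsym] Hcub; exact: main_sec. Qed.
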